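(* Let $(X,\tau)$ and $(Y,\sigma)$ be fuzzifying topological spaces, $f:X\to Y$, and let $\beta^X_P\in\Im(P(X))$ be a pre-base of $\tau_P$. Then $$O_P(f)=\inf_{B\subseteq X}\min\big(1,\ 1-\beta_P^X(B)+\sigma_P(f(B))\big),$$ i.e. $O_P(f)=[\forall B(B\in\beta^X_P\to f(B)\in\sigma_P)]$.
   Context: A fuzzifying topology on $Z$ is $\tau:P(Z)\to[0,1]$ with $\tau(Z)=1$, $\tau(A\cap B)\ge\min(\tau(A),\tau(B))$, $\tau(\bigcup A_\lambda)\ge\inf\tau(A_\lambda)$. $N_x(A)=\sup_{x\in B\subseteq A}\tau(B)$; $Cl(A)(x)=1-N_x(Z\setminus A)$; for $\mu:Z\to[0,1]$, $Int(\mu)(x)=\sup_{x\in B}\min(\tau(B),\inf_{y\in B}\mu(y))$; pre-open degrees $\tau_P(A)=\inf_{x\in A}Int(Cl(A))(x)$ (similarly $\sigma_P$ for $(Y,\sigma)$); $N^P_x(A)=\sup_{x\in B\subseteq A}\tau_P(B)$. A pre-base of $\tau_P$ is $\beta\in\Im(P(X))$ with $\beta\le\tau_P$ pointwise and $N^P_x(A)\le\sup_{x\in B\subseteq A}\beta(B)$ for all $x\in X$, $A\subseteq X$. Fuzzifying pre-openness: $O_P(f)=\inf_{U\subseteq X}\min(1,1-\tau_P(U)+\sigma_P(f(U)))$. *)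

(* Defs.v *)
From HB Require Import structures.
From mathcomp Require Import all_boot all_order all_algebra.
From mathcomp Require Import all_classical all_reals.
Set Implicit Arguments. Unset Strict Implicit. Unset Printing Implicit Defensive.
Import Order.TTheory GRing.Theory Num.Theory.
Local Open Scope classical_set_scope.
Local Open Scope ring_scope.

Section FuzzyDefs.
Variable R : realType.

(* infimum / supremum computed in the complete lattice [0,1]:
   inf of the empty family is 1, sup of the empty family is 0. *)
Definition inf01 (S : set R) : R := inf (S `|` [set 1]).
Definition sup01 (S : set R) : R := sup (S `|` [set 0]).

Variable Z : Type.

Definition is_fuzzifying_topology (tau : set Z -> R) : Prop :=
  [/\ (forall A, 0 <= tau A <= 1),
      tau setT = 1,
      (forall A B, Num.min (tau A) (tau B) <= tau (A `&` B)) &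
      (forall F : set (set Z), inf01 (tau @` F) <= tau (\bigcup_(A in F) A))].

Definition nbhd (tau : set Z -> R) (x : Z) (A : set Z) : R :=
  sup01 [set tau B | B in [set B | B x /\ B `<=` A]].

Definition fclosure (tau : set Z -> R) (A : set Z) (x : Z) : R :=
  1 - nbhd tau x (~` A).

Definition finterior (tau : set Z -> R) (mu : Z -> R) (x : Z) : R :=
  sup01 [set Num.min (tau B) (inf01 (mu @` B)) | B in [set B | B x]].

Definition preopen (tau : set Z -> R) (A : set Z) : R :=
  inf01 [set finterior tau (fclosure tau A) x | x in A].

Definition prenbhd (tau : set Z -> R) (x : Z) (A : set Z) : R :=
  sup01 [set preopen tau B | B in [set B | B x /\ B `<=` A]].

Definition is_prebase (tau : set Z -> R) (beta : set Z -> R) : Prop :=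
  [/\ (forall A, 0 <= beta A <= 1),
      (forall A, beta A <= preopen tau A) &
      (forall x A, prenbhd tau x A <=
         sup01 [set beta B | B in [set B | B x /\ B `<=` A]])].
End FuzzyDefs.

Definition fpreopen_map (R : realType) (X Y : Type) (tau : set X -> R)
  (sigma : set Y -> R) (f : X -> Y) : R :=
  inf01 [set Num.min 1 (1 - preopen tau U + preopen sigma (f @` U)) | U in [set: set X]].

(* Main.v *)
Require Import Defs.
From HB Require Import structures.
From mathcomp Require Import all_boot all_order all_algebra.
From mathcomp Require Import all_classical all_reals.
From mathcomp Require Import lra.
Import Order.TTheory GRing.Theory Num.Theory.
Local Open Scope classical_set_scope.
Local Open Scope ring_scope.
Set Implicit Arguments.

Section H.
Variable R : realType.

Lemma inf01_le (S : set R) x : (forall y, S y -> 0 <= y) -> S x -> inf01 S <= x.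
Proof.
move=> H Sx; apply: ge_inf; last by left.
exists 0 => y [/H//|->]; exact: ler01.
Qed.

Lemma inf01_le1 (S : set R) : (forall y, S y -> 0 <= y) -> inf01 S <= 1.
Proof.
move=> H; apply: ge_inf; last by right.
exists 0 => y [/H//|->]; exact: ler01.
Qed.

Lemma le_inf01 (S : set R) a : (forall y, S y -> a <= y) -> a <= 1 -> a <= inf01 S.
Proof.
move=> H a1; apply: lb_le_inf; first by exists 1; right.
by move=> y [/H//|->].
Qed.

Lemma inf01_ge0 (S : set R) : (forall y, S y -> 0 <= y) -> 0 <= inf01 S.
Proof. by move=> H; apply: le_inf01 => //; exact: ler01. Qed.

Lemma sup01_ge (S : set R) x : (forall y, S y -> y <= 1) -> S x -> x <= sup01 S.
Proof.
move=> H Sx; apply: ub_le_sup; last by left.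
exists 1 => y [/H//|->]; exact: ler01.
Qed.

Lemma sup01_ge0 (S : set R) : (forall y, S y -> y <= 1) -> 0 <= sup01 S.
Proof.
move=> H; apply: ub_le_sup; last by right.
exists 1 => y [/H//|->]; exact: ler01.
Qed.

Lemma sup01_le (S : set R) a : (forall y, S y -> y <= a) -> 0 <= a -> sup01 S <= a.
Proof.
move=> H a0; apply: ge_sup; first by exists 0; right.
by move=> y [/H//|->].
Qed.

Lemma sup01_gt (S : set R) a : a < sup01 S -> exists y, (S y \/ y = 0) /\ a < y.
Proof.
move=> /sup_gt[]; first by exists 0; right.
by move=> y Sy ay; exists y.
Qed.

Lemma inf01_mono (S T : set R) : (forall y, S y -> 0 <= y) ->
  (forall y, T y -> exists x, S x /\ x <= y) -> inf01 S <= inf01 T.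
Proof.
move=> H0 H; apply: le_inf01; last exact: inf01_le1.
move=> y /H [x [Sx xy]]; apply: le_trans xy; exact: inf01_le H0 Sx.
Qed.

Lemma sup01_mono (S T : set R) : (forall y, T y -> y <= 1) ->
  (forall y, S y -> exists x, T x /\ y <= x) -> sup01 S <= sup01 T.
Proof.
move=> H0 H; apply: sup01_le; last exact: sup01_ge0.
move=> y /H [x [Sx xy]]; apply: (le_trans xy); exact: sup01_ge H0 Sx.
Qed.

Variable Z : Type.
Variable tau : set Z -> R.
Hypothesis tau01 : forall A, 0 <= tau A <= 1.

Lemma tau1 A : tau A <= 1. Proof. by case/andP: (tau01 A). Qed.

Lemma nbhd_01 x A : 0 <= nbhd tau x A <= 1.
Proof.
apply/andP; split.
  by apply: sup01_ge0 => _ [B _ <-]; exact: tau1.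
by apply: sup01_le => [_ [B _ <-]|]; [exact: tau1|exact: ler01].
Qed.

Lemma fclosure_01 A x : 0 <= Defs.fclosure tau A x <= 1.
Proof.
rewrite /Defs.fclosure; case/andP: (nbhd_01 x (~` A)) => h0 h1.
by apply/andP; split; rewrite ?subr_ge0 // lerBlDr lerDl.
Qed.

Lemma fclosure_mono A A' x : A `<=` A' -> Defs.fclosure tau A x <= Defs.fclosure tau A' x.
Proof.
move=> AA'; rewrite /Defs.fclosure lerD2l lerN2.
apply: sup01_mono => [_ [B _ <-]|]; first exact: tau1.
move=> _ [B [Bx BA] <-]; exists (tau B); split => //.
exists B => //; split => // z /BA Az A'z; exact/Az/AA'.
Qed.

Lemma finterior_01 mu x : 0 <= finterior tau mu x <= 1.
Proof.
have H : forall y, [set Num.min (tau B) (inf01 (mu @` B)) | B in [set B | B x]] y -> y <= 1.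
  by move=> _ [B _ <-]; rewrite ge_min tau1.
apply/andP; split; first exact: sup01_ge0.
by apply: sup01_le => //; exact: ler01.
Qed.

Lemma finterior_mono (mu mu' : Z -> R) x : (forall z, 0 <= mu z) ->
  (forall z, mu z <= mu' z) -> finterior tau mu x <= finterior tau mu' x.
Proof.
move=> mu0 mumu'; apply: sup01_mono.
  by move=> _ [B _ <-]; rewrite ge_min tau1.
move=> _ [B Bx <-]; eexists; split; first by exists B.
apply: le_min2 => //; apply: inf01_mono; first by move=> _ [z _ <-].
by move=> _ [z Bz <-]; exists (mu z); split; [exists z|].
Qed.

Lemma preopen_01 A : 0 <= preopen tau A <= 1.
Proof.
have H : forall y, [set finterior tau (Defs.fclosure tau A) x | x in A] y -> 0 <= y.
  by move=> _ [z _ <-]; case/andP: (finterior_01 (Defs.fclosure tau A) z).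
by apply/andP; split; [exact: inf01_ge0 | exact: inf01_le1].
Qed.

End H.

Unset Implicit Arguments.

Theorem lemma3p1 (R : realType) (X Y : Type) (tau : set X -> R) (sigma : set Y -> R)
  (f : X -> Y) (beta : set X -> R) :
  is_fuzzifying_topology tau -> is_fuzzifying_topology sigma ->
  is_prebase tau beta ->
  fpreopen_map tau sigma f =
  inf01 [set Num.min 1 (1 - beta B + preopen sigma (f @` B)) | B in [set: set X]].
Proof.
move=> [t01 _ _ _] [s01 _ _ _] [b01 bP bN].
have tP01 := @preopen_01 _ _ _ t01; have sP01 := @preopen_01 _ _ _ s01.
have H0 : forall (a b : R), a <= 1 -> 0 <= b -> 0 <= Num.min 1 (1 - a + b).
  move=> a b a1 b0; rewrite le_min ler01 /=; lra.
rewrite /fpreopen_map; apply/eqP; rewrite eq_le; apply/andP; split.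
  apply: inf01_mono.
    move=> _ [U _ <-]; apply: H0; [by case/andP: (tP01 U)|by case/andP: (sP01 (f @` U))].
  move=> _ [B _ <-]; eexists; split; first by exists B.
  apply: le_min2 => //; rewrite lerD2r lerD2l lerN2; exact: bP.
set c := inf01 _.
have Hge0 : forall y, [set Num.min 1 (1 - beta B + preopen sigma (f @` B)) | B in [set: set X]] y -> 0 <= y.
  move=> _ [B _ <-]; apply: H0; [by case/andP: (b01 B)|by case/andP: (sP01 (f @` B))].
have c1 : c <= 1 by exact: inf01_le1.
have c0 : 0 <= c by exact: inf01_ge0.
apply: le_inf01 => // _ [U _ <-].
rewrite le_min c1 /=.
case/andP: (tP01 U) => tU0 tU1.
suff : preopen tau U + c - 1 <= preopen sigma (f @` U) by lra.
apply: le_inf01; first last.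
  case/andP: (sP01 (f @` U)) => ? ?; lra.
move=> _ [_ [x Ux <-] <-].
set v := finterior _ _ _.
have v01 : 0 <= v <= 1 by exact: (@finterior_01 _ _ _ s01).
case/andP: v01 => v0 v1.
rewrite leNgt; apply/negP => lt.
have h1 : preopen tau U <= prenbhd tau x U.
  apply: sup01_ge; first by move=> _ [B _ <-]; case/andP: (tP01 B).
  by exists U => //; split.
have h2 := le_trans h1 (bN x U).
have hsup : v + 1 - c < sup01 [set beta B | B in [set B | B x /\ B `<=` U]].
  by apply: lt_le_trans h2; lra.
case: (@sup01_gt _ _ _ hsup) => y [[[B [Bx BU] <-]|->] lty].
- have hB : c <= Num.min 1 (1 - beta B + preopen sigma (f @` B)).
    by apply: inf01_le => //; exists B.
  move: hB; rewrite le_min => /andP[_ hB].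
  have hs : preopen sigma (f @` B) <= finterior sigma (Defs.fclosure sigma (f @` B)) (f x).
    apply: inf01_le; last by exists (f x) => //; exists x.
    by move=> _ [z _ <-]; case/andP: (@finterior_01 _ _ _ s01 (Defs.fclosure sigma (f @` B)) z).
  have hm : finterior sigma (Defs.fclosure sigma (f @` B)) (f x) <= v.
    apply: (@finterior_mono _ _ _ s01).
      by move=> z; case/andP: (@fclosure_01 _ _ _ s01 (f @` B) z).
    move=> z; apply: (@fclosure_mono _ _ _ s01).
    by move=> _ [w Bw <-]; exists w => //; apply: BU.
  lra.
- lra.
Qed.
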